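(* There exists an algorithm that, given any set $A$ of $N$ elements and an integer $h \in \{0,\dots,N\}$, returns a set chosen uniformly at random among all subsets of $A$ with exactly $h$ elements. The algorithm requires $O(N)$ time and at most $60N$ random bits with probability at least $1 - O\left(e^{-\sqrt{N}}\right)$.
   Context: The algorithm has access to a source of independent unbiased random bits. *)

(* Defs.v *)
From Stdlib Require Import Reals.
From mathcomp Require Import all_boot.

Set Implicit Arguments.
Unset Strict Implicit.
Unset Printing Implicit Defensive.

Inductive instr : Type :=
| IConst (d c : nat)
| IAdd (d s1 s2 : nat)
| ISub (d s1 s2 : nat)        (* reg d := reg s1 - reg s2 (truncated)  *)
| IMul (d s1 s2 : nat)
| IDiv (d s1 s2 : nat)
| IMod (d s1 s2 : nat)
| ILoad (d s : nat)
| IStore (s1 s2 : nat)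
| IRand (d : nat)
| IJlt (s1 s2 l : nat)
| IJmp (l : nat)
| IHalt.

Definition program := seq instr.

Record state := State {
  pc : nat;
  reg : nat -> nat;
  mem : nat -> nat;
  used : nat   (* number of random bits consumed so far *)
}.

Definition upd (f : nat -> nat) (i v : nat) : nat -> nat :=
  fun j => if j == i then v else f j.

Definition is_halt (i : instr) : bool :=
  if i is IHalt then true else false.

(* Word size W: an arithmetic result that does not fit in W bits is a
   fault (the machine gets stuck and never halts).  Reading a random bit
   beyond the supplied finite bit string w also gets the machine stuck. *)
Definition step (P : program) (W : nat) (w : seq bool) (s : state)
  : option state :=
  let next r := State (pc s).+1 r (mem s) (used s) in
  let arith d v := if v < 2 ^ W then Some (next (upd (reg s) d v)) else None in
  match nth IHalt P (pc s) with
  | IConst d c => Some (next (upd (reg s) d c))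
  | IAdd d a b => arith d (reg s a + reg s b)
  | ISub d a b => arith d (reg s a - reg s b)
  | IMul d a b => arith d (reg s a * reg s b)
  | IDiv d a b => arith d (reg s a %/ reg s b)
  | IMod d a b => arith d (reg s a %% reg s b)
  | ILoad d a => Some (next (upd (reg s) d (mem s (reg s a))))
  | IStore a b =>
      Some (State (pc s).+1 (reg s) (upd (mem s) (reg s a) (reg s b)) (used s))
  | IRand d =>
      if used s < size w then
        Some (State (pc s).+1 (upd (reg s) d (nth false w (used s)))
                    (mem s) (used s).+1)
      else None
  | IJlt a b l =>
      Some (State (if reg s a < reg s b then l else (pc s).+1)
                  (reg s) (mem s) (used s))
  | IJmp l => Some (State l (reg s) (mem s) (used s))
  | IHalt => None
  end.

Fixpoint run (P : program) (W : nat) (w : seq bool) (T : nat) (s : state)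
  : option state :=
  if is_halt (nth IHalt P (pc s)) then Some s else
  match T with
  | 0 => None
  | T'.+1 =>
      match step P W w s with
      | Some s' => run P W w T' s'
      | None => None
      end
  end.

Definition halts (o : option state) : bool :=
  if o is Some _ then true else false.

Definition init (A : seq nat) (h : nat) : state :=
  State 0 (fun r => if r == 0 then size A else if r == 1 then h else 0)
        (fun i => nth 0 A i) 0.

Definition output (s : state) (h : nat) : seq nat :=
  [seq mem s i | i <- iota 0 h].

(* As L -> oo this increases to the probability that the algorithm
   (run on an infinite stream of independent unbiased bits) outputs S. *)
Definition prob_out (P : program) (W : nat) (A : seq nat) (h : nat)
  (S : seq nat) (L : nat) : R :=
  Rdiv (INR (#|[pred w : L.-tuple bool |
          if run P W w L (init A h) is Some s
          then perm_eq (output s h) S else false]|)%nat) (pow 2 L).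

Definition prob_within (P : program) (W : nat) (A : seq nat) (h : nat)
  (T B : nat) : R :=
  Rdiv (INR (#|[pred w : B.-tuple bool | halts (run P W w T (init A h))]|)%nat) (pow 2 B).

Definition word_size (cw N : nat) : nat := cw * (trunc_log 2 N).+1.

(* Main.v *)
Require Import Defs.
From Stdlib Require Import Reals Lra Psatz.
From mathcomp Require Import all_boot zify.

Set Implicit Arguments.
Unset Strict Implicit.
Unset Printing Implicit Defensive.

Section P1sec.


Fixpoint pr (L : nat) (E : seq bool -> bool) : R :=
  match L with
  | 0 => if E [::] then R1 else R0
  | L'.+1 => Rdiv (Rplus (pr L' (fun w => E (false :: w))) (pr L' (fun w => E (true :: w)))) 2
  end.

Fixpoint cnt (L : nat) (E : seq bool -> bool) : nat :=
  match L with
  | 0 => nat_of_bool (E [::])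
  | L'.+1 => cnt L' (fun w => E (false :: w)) + cnt L' (fun w => E (true :: w))
  end.

Fixpoint allbits (L : nat) : seq (seq bool) :=
  match L with
  | 0 => [:: [::]]
  | L'.+1 => map (cons false) (allbits L') ++ map (cons true) (allbits L')
  end.

Lemma cnt_allbits L E : cnt L E = count E (allbits L).
Proof.
elim: L E => [|L IH] E /=; first by rewrite addn0.
by rewrite count_cat !count_map !IH.
Qed.

Lemma mem_allbits L w : (w \in allbits L) = (size w == L).
Proof.
elim: L w => [|L IH] w.
  by case: w.
rewrite /= mem_cat.
case: w => [|b w].
  by apply/negP => /orP [] /mapP [v _ //].
rewrite /= eqSS -IH.
case: b.
  apply/idP/idP.
    case/orP => /mapP [v Hv //] [->] //.
  by move=> H; apply/orP; right; apply/mapP; exists w.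
apply/idP/idP.
  case/orP => /mapP [v Hv //] [->] //.
by move=> H; apply/orP; left; apply/mapP; exists w.
Qed.

Lemma uniq_allbits L : uniq (allbits L).
Proof.
elim: L => [|L IH] //=.
rewrite cat_uniq !map_inj_uniq ?IH /=; try by move=> x y [].
rewrite andbT; apply/hasPn => x /mapP [v _ ->]; apply/negP => /mapP [u _ //].
Qed.

Lemma card_cnt L (E : seq bool -> bool) : #|[pred w : L.-tuple bool | E w]| = cnt L E.
Proof.
rewrite cnt_allbits cardE size_filter -enumT.
have -> : count [pred w : L.-tuple bool | E w] (enum {: L.-tuple bool}) = count E (map val (enum {: L.-tuple bool})).
  by rewrite [RHS]count_map enumT; apply: eq_count.
apply/permP.
apply: uniq_perm.
- rewrite map_inj_uniq ?enum_uniq //; exact: val_inj.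
- exact: uniq_allbits.
move=> w; rewrite mem_allbits.
apply/idP/idP.
  by case/mapP => t _ ->; rewrite size_tuple.
move=> H; apply/mapP; exists (Tuple H) => //; by rewrite mem_enum.
Qed.

Lemma pr_cnt L E : pr L E = Rdiv (INR (cnt L E)) (pow 2 L).
Proof.
Local Open Scope R_scope.
elim: L E => [|L IH] E /=.
  by case: (E [::]) => /=; field.
rewrite !IH plus_INR; field; apply: pow_nonzero; lra.
Qed.

Lemma pr_card L (E : seq bool -> bool) : Rdiv (INR (#|[pred w : L.-tuple bool | E w]|)%nat) (pow 2 L) = pr L E.
Proof. by rewrite card_cnt pr_cnt. Qed.

End P1sec.

Section P2sec.


Local Open Scope R_scope.

Lemma RabsP x a : Rabs x <= a -> - a <= x <= a.
Proof. unfold Rabs; destruct Rcase_abs; lra. Qed.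

Lemma pr_S L E : pr L.+1 E = (pr L (fun w => E (false :: w)) + pr L (fun w => E (true :: w))) / 2.
Proof. by []. Qed.

Lemma pr_ext L E E' : (forall w, size w = L -> E w = E' w) -> pr L E = pr L E'.
Proof.
elim: L E E' => [|L IH] E E' H /=.
  by rewrite H.
rewrite (IH (fun w => E (false :: w)) (fun w => E' (false :: w))); last by move=> w Hw; rewrite H //= Hw.
by rewrite (IH (fun w => E (true :: w)) (fun w => E' (true :: w))); last by move=> w Hw; rewrite H //= Hw.
Qed.

Lemma pr_bounds L E : 0 <= pr L E <= 1.
Proof.
elim: L E => [|L IH] E /=.
  case: (E [::]); lra.
have := IH (fun w => E (false :: w)); have := IH (fun w => E (true :: w)); lra.
Qed.

Lemma pr_const L (b : bool) : pr L (fun _ => b) = if b then 1 else 0.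
Proof.
elim: L => [|L IH] /=.
  by case: b.
rewrite IH; destruct b; lra.
Qed.

Lemma pr_take_S L E : (forall w, E w = E (take L w)) -> pr L.+1 E = pr L E.
Proof.
elim: L E => [|L IH] E H.
  rewrite /= (H [:: false]) (H [:: true]) /=; case: (E [::]); lra.
rewrite [LHS]pr_S [RHS]pr_S  (IH (fun w => E (false :: w))); last by move=> w; rewrite H /= [in RHS]H /= take_takel.
by rewrite (IH (fun w => E (true :: w))); last by move=> w; rewrite H /= [in RHS]H /= take_takel.
Qed.

Lemma pr_take K L E : (K <= L)%N -> pr L (fun w => E (take K w)) = pr K E.
Proof.
move=> HKL.
have -> : L = (K + (L - K))%N by lia.
elim: (L - K)%N => [|d IH].
  rewrite addn0; apply: pr_ext => w Hw; by rewrite -Hw take_size.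
rewrite addnS pr_take_S //.
by move=> w; rewrite take_takel //; lia.
Qed.

Fixpoint bern (q r : nat) (w : seq bool) : option (bool * seq bool) :=
  match w with
  | [::] => None
  | b :: w' =>
      let d := (q <= r + r)%N in
      if b == d then bern q (if d then (r + r - q)%N else (r + r)%N) w'
      else Some (d, w')
  end.

Definition bev (q r : nat) (F : bool -> seq bool -> bool) (w : seq bool) : bool :=
  if bern q r w is Some (d, w') then F d w' else false.

Lemma bev_cons q r F b w :
  bev q r F (b :: w) =
  if b == (q <= r + r)%N then bev q (if (q <= r + r)%N then (r + r - q)%N else (r + r)%N) F w
  else F (q <= r + r)%N w.
Proof. by rewrite /bev /=; case: ifP. Qed.

Lemma bern_err q F (v : bool -> R) eps L0 :
  (0 < q)%N -> 0 <= eps -> (forall d, 0 <= v d <= 1) ->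
  (forall d L, (L0 <= L)%N -> Rabs (pr L (F d) - v d) <= eps) ->
  forall M r L, (r <= q)%N -> (L0 + M <= L)%N ->
  Rabs (pr L (bev q r F) - (INR r / INR q * v true + (1 - INR r / INR q) * v false))
    <= eps + (1/2) ^ M.
Proof.
move=> Hq He Hv HF M; elim: M => [|M IH] r L Hr HL.
  have Hq' : 0 < INR q by apply: lt_0_INR; apply/ltP.
  have Ha0 : 0 <= INR r / INR q by apply: Rle_mult_inv_pos => //; apply: pos_INR.
  have Ha1 : INR r / INR q <= 1.
    apply: (Rmult_le_reg_r (INR q)) => //; rewrite /Rdiv Rmult_assoc Rinv_l; last lra.
    rewrite Rmult_1_r Rmult_1_l; apply: le_INR; apply/leP.
    done.
  have := pr_bounds L (bev q r F); have := Hv true; have := Hv false.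
  move=> H1 H2 H3; apply: Rabs_le; simpl; nra.
case: L HL => [|L] HL; first by lia.
have HL' : (L0 + M <= L)%N by lia.
have Hq' : 0 < INR q by apply: lt_0_INR; apply/ltP.
rewrite pr_S.
under [pr L (fun w => bev q r F (false :: w))]pr_ext do rewrite bev_cons.
under [pr L (fun w => bev q r F (true :: w))]pr_ext do rewrite bev_cons.
have HL0 : (L0 <= L)%N by lia.
case Hd: (q <= r + r)%N => /=.
  have Hr' : (r + r - q <= q)%N by lia.
  have E1 := RabsP (HF true L HL0).
  have E2 := RabsP (IH _ L Hr' HL').
  have Ha : INR (r + r - q) / INR q = 2 * (INR r / INR q) - 1.
    rewrite minus_INR; last by apply/leP.
    rewrite plus_INR; field; lra.
  rewrite Ha in E2.
  change (pr L (fun w => F true w)) with (pr L (F true)).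
  change (pr L (fun w => bev q (r + r - q) F w)) with (pr L (bev q (r + r - q) F)).
  apply: Rabs_le; nra.
have Hr' : (r + r <= q)%N by lia.
have E1 := RabsP (HF false L HL0).
have E2 := RabsP (IH _ L Hr' HL').
have Ha : INR (r + r) / INR q = 2 * (INR r / INR q).
  rewrite plus_INR; field; lra.
rewrite Ha in E2.
change (pr L (fun w => F false w)) with (pr L (F false)).
change (pr L (fun w => bev q (r + r) F w)) with (pr L (bev q (r + r) F)).
apply: Rabs_le; nra.
Qed.

Fixpoint alg (n p : nat) (w : seq bool) : option (seq bool * seq bool) :=
  match n with
  | 0 => Some ([::], w)
  | n'.+1 =>
      match bern n p w with
      | Some (d, w') =>
          match alg n' (p - d) w' with
          | Some (xs, w'') => Some (d :: xs, w'')
          | None => None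
          end
      | None => None
      end
  end.

Definition Ealg n p x w : bool :=
  if alg n p w is Some (xs, _) then xs == x else false.

Fixpoint V (n p : nat) (x : seq bool) : R :=
  match n, x with
  | 0, [::] => 1
  | 0, _ :: _ => 0
  | _.+1, [::] => 0
  | n'.+1, d :: xs =>
      (if d then INR p / INR n else 1 - INR p / INR n) * V n' (p - d) xs
  end.

Lemma V_S n p d xs : V n.+1 p (d :: xs) =
  (if d then INR p / INR n.+1 else 1 - INR p / INR n.+1) * V n (p - d) xs.
Proof. by []. Qed.

Lemma V_bounds n p x : (p <= n)%N -> 0 <= V n p x <= 1.
Proof.
elim: n p x => [|n IH] p [|d xs] Hp; try (simpl; lra).
rewrite V_S.
have Hn : 0 < INR n.+1 by apply: lt_0_INR; apply/ltP.
have Ha0 : 0 <= INR p / INR n.+1 by apply: Rle_mult_inv_pos => //; apply: pos_INR.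
have Ha1 : INR p / INR n.+1 <= 1.
  apply: (Rmult_le_reg_r (INR n.+1)) => //; rewrite /Rdiv Rmult_assoc Rinv_l; last lra.
  rewrite Rmult_1_r Rmult_1_l; apply: le_INR; apply/leP; done.
case: d.
  have := IH (p - true)%N xs; move/(_ ltac:(simpl; lia)) => H; nra.
have [Hpn|Hpn] := leqP p n.
  have := IH (p - false)%N xs; move/(_ ltac:(simpl; lia)) => H; nra.
have Hpe : p = n.+1 by lia.
have := pr_bounds 0 (fun _ => true).
rewrite subn0 Hpe /Rdiv Rinv_r; last lra.
rewrite Rminus_diag Rmult_0_l => _; lra.
Qed.

Lemma bern_full q w d w' : bern q q w = Some (d, w') -> d = true.
Proof.
elim: w => [|b w IH] //=.
have -> : (q <= q + q)%N by lia.
have -> : (q + q - q)%N = q by lia.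
by case: ifP => // _ [<-].
Qed.

Lemma Ealg_S n p d0 xs w :
  Ealg n.+1 p (d0 :: xs) w = bev n.+1 p (fun d w' => (d == d0) && Ealg n (p - d) xs w') w.
Proof.
rewrite /Ealg /bev /=.
case: (bern n.+1 p w) => [[d w']|] //.
case: (alg n (p - d) w') => [[ys w'']|] //.
by rewrite andbF.
Qed.

Lemma Ealg_err n p x M L : (p <= n)%N -> (n * M <= L)%N ->
  Rabs (pr L (Ealg n p x) - V n p x) <= INR n * (1/2) ^ M.
Proof.
elim: n p x L => [|n IH] p x L Hp HL.
  rewrite /Ealg /= pr_const; case: x => [|d xs] /=;
  rewrite Rminus_diag Rabs_R0; lra.
case: x => [|d0 xs].
  have -> : pr L (Ealg n.+1 p [::]) = pr L (fun _ => false).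
    apply: pr_ext => w _; rewrite /Ealg /=.
    case: (bern n.+1 p w) => [[d w']|] //.
    by case: (alg n (p - d) w') => [[ys w'']|].
  have -> : V n.+1 p [::] = 0 by [].
  rewrite pr_const Rminus_diag Rabs_R0; apply: Rmult_le_pos; [apply: pos_INR|].
  apply: pow_le; lra.
have Hn : 0 < INR n.+1 by apply: lt_0_INR; apply/ltP.
rewrite S_INR Rmult_plus_distr_r Rmult_1_l.
have Heps : 0 <= INR n * (1/2)^M by apply: Rmult_le_pos; [apply: pos_INR| apply: pow_le; lra].
set v := fun d : bool => if d == d0 then V n (p - d) xs else 0.
have HV : V n.+1 p (d0 :: xs) =
   INR p / INR n.+1 * v true + (1 - INR p / INR n.+1) * v false.
  rewrite /v V_S; clear v; case: d0 => /=; lra.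
rewrite HV.
have [Hpn|Hpn] := leqP p n.
  rewrite (pr_ext (E' := bev n.+1 p (fun d w' => (d == d0) && Ealg n (p - d) xs w'))); last first.
    by move=> w _; rewrite Ealg_S.
  apply: (bern_err (L0 := (n * M)%N)) => //; try lia.
  - move=> d; rewrite /v; case: ifP => _; [apply: V_bounds; lia| lra].
  - move=> d L' HL'; rewrite /v; case: ifP => Hd.
      by apply: IH => //; lia.
    rewrite (pr_ext (E' := fun _ => false)).
      rewrite pr_const Rminus_diag Rabs_R0 //.
    by move=> w _.
have Hpe : p = n.+1 by lia.
set F' := fun d w' => if d then (true == d0) && Ealg n (p - true) xs w' else false.
rewrite (pr_ext (E' := bev n.+1 p F')); last first.
  move=> w _; rewrite Ealg_S /bev.
  case Hb: (bern n.+1 p w) => [[d w']|] //.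
  rewrite Hpe in Hb; by rewrite (bern_full Hb).
set v' := fun d : bool => if d then v true else 0.
have -> : INR p / INR n.+1 * v true + (1 - INR p / INR n.+1) * v false =
          INR p / INR n.+1 * v' true + (1 - INR p / INR n.+1) * v' false.
  rewrite /v' Hpe /Rdiv Rinv_r; last lra.
  rewrite Rminus_diag !Rmult_0_l; lra.
apply: (bern_err (L0 := (n * M)%N)) => //; try lia.
- move=> d; rewrite /v' /v; case: d; last lra.
  case: ifP => _; [apply: V_bounds; lia| lra].
- move=> d L' HL'; rewrite /v' /v /F'; case: d.
    case: ifP => Hd.
      by apply: IH => //; lia.
    rewrite (pr_ext (E' := fun _ => false)).
      rewrite pr_const Rminus_diag Rabs_R0 //.
    by move=> w _.
  rewrite pr_const Rminus_diag Rabs_R0 //.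
Qed.

Lemma V_binom x p : count id x = p -> V (size x) p x = / INR 'C(size x, p).
Proof.
elim: x p => [|d xs IH] p Hp.
  by rewrite /= -Hp /= Rinv_1.
rewrite /= in Hp; rewrite [size _]/= V_S.
set n := size xs; set c := count id xs.
have Hc : (c <= n)%N by rewrite /c /n count_size.
have HC : 0 < INR 'C(n, c) by apply: lt_0_INR; apply/ltP; rewrite bin_gt0.
have Hn : 0 < INR n.+1 by apply: lt_0_INR; apply/ltP.
have HV := IH c erefl; rewrite -/n in HV.
case: d Hp => Hp; rewrite -Hp.
  have -> : (true + count id xs - true)%N = c by rewrite /c; lia.
  have -> : (true + count id xs)%N = c.+1 by rewrite /c; lia.
  rewrite HV.
  have E : INR 'C(n.+1, c.+1) = INR n.+1 * INR 'C(n, c) / INR c.+1.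
    have H : INR n.+1 * INR 'C(n, c) = INR c.+1 * INR 'C(n.+1, c.+1).
      by rewrite -!mult_INR; congr INR; exact: (mul_bin_diag n.+1 c).
    rewrite H; field; apply: not_0_INR; done.
  rewrite E.
  field; repeat split; try lra; apply: not_0_INR; done.
have -> : (false + count id xs - false)%N = c by rewrite /c; lia.
have -> : (false + count id xs)%N = c by rewrite /c; lia.
rewrite HV.
have E : INR 'C(n.+1, c) = INR n.+1 * INR 'C(n, c) / INR (n.+1 - c).
  have H : INR n.+1 * INR 'C(n, c) = INR (n.+1 - c) * INR 'C(n.+1, c).
    by rewrite -!mult_INR; congr INR; exact: (mul_bin_down n.+1 c).
  rewrite H; field; apply: not_0_INR; lia.
rewrite E minus_INR; last by apply/leP; lia.
field; repeat split; try lra.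
rewrite -minus_INR; last by apply/leP; lia.
apply: not_0_INR; lia.
Qed.

Definition Esucc n p w : bool := if alg n p w is Some _ then true else false.

Lemma Esucc_S n p w : Esucc n.+1 p w = bev n.+1 p (fun d w' => Esucc n (p - d) w') w.
Proof.
rewrite /Esucc /bev /=.
case: (bern n.+1 p w) => [[d w']|] //.
by case: (alg n (p - d) w') => [[ys w'']|].
Qed.

Lemma bern_tail q F c : 1 <= c ->
  (forall d B, 1 - c * (2/3) ^ B <= pr B (F d)) ->
  forall B r, 1 - 3 * c * (2/3) ^ B <= pr B (bev q r F).
Proof.
move=> Hc HF B; elim: B => [|B IH] r.
  have := pr_bounds 0 (bev q r F); simpl; lra.
rewrite pr_S.
under [pr B (fun w => bev q r F (false :: w))]pr_ext do rewrite bev_cons.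
under [pr B (fun w => bev q r F (true :: w))]pr_ext do rewrite bev_cons.
have Hp : 0 <= (2/3)^B by apply: pow_le; lra.
case: (q <= r + r)%N => /=.
  change (pr B (fun w => F true w)) with (pr B (F true)).
  have := HF true B; have := IH (r + r - q)%N.
  change (pr B (fun w => bev q (r + r - q) F w)) with (pr B (bev q (r + r - q) F)).
  nra.
change (pr B (fun w => F false w)) with (pr B (F false)).
have := HF false B; have := IH (r + r)%N.
change (pr B (fun w => bev q (r + r) F w)) with (pr B (bev q (r + r) F)).
nra.
Qed.

Lemma Esucc_tail n p B : 1 - 3 ^ n * (2/3) ^ B <= pr B (Esucc n p).
Proof.
elim: n p B => [|n IH] p B.
  rewrite (pr_ext (E' := fun _ => true)) // pr_const.
  have : 0 <= (2/3)^B by apply: pow_le; lra.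
  simpl; lra.
rewrite (pr_ext (E' := bev n.+1 p (fun d w' => Esucc n (p - d) w'))); last by move=> w _; rewrite Esucc_S.
have -> : 3 ^ n.+1 * (2/3) ^ B = 3 * 3 ^ n * (2/3) ^ B by simpl; ring.
apply: bern_tail.
  by apply: pow_R1_Rle; lra.
by move=> d B'; apply: IH.
Qed.

End P2sec.


Definition prog : program :=
  [:: IConst 9 1;      (* 0 *)
      IJlt 2 0 3;      (* 1 *)
      IHalt;           (* 2 *)
      ISub 4 1 3;      (* 3 *)
      ISub 5 0 2;      (* 4 *)
      IAdd 6 4 11;     (* 5 *)
      IAdd 6 6 6;      (* 6 *)
      IConst 7 0;      (* 7 *)
      IJlt 6 5 11;     (* 8 *)
      IConst 7 1;      (* 9 *)
      ISub 6 6 5;      (* 10 *)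
      IRand 8;         (* 11 *)
      IJlt 8 7 15;     (* 12 *)
      IJlt 7 8 18;     (* 13 *)
      IJmp 6;          (* 14 *)
      ILoad 10 2;      (* 15 *)
      IStore 3 10;     (* 16 *)
      IAdd 3 3 9;      (* 17 *)
      IAdd 2 2 9;      (* 18 *)
      IJmp 1 ].        (* 19 *)

Fixpoint stepn (P : program) W w (k : nat) (s : state) : option state :=
  match k with
  | 0 => Some s
  | k'.+1 => if step P W w s is Some s' then stepn P W w k' s' else None
  end.

Lemma stepn_trans P W w a b s s1 s2 :
  stepn P W w a s = Some s1 -> stepn P W w b s1 = Some s2 -> stepn P W w (a + b) s = Some s2.
Proof.
elim: a s => [|a IH] s /=; first by move=> [->].
case: (step P W w s) => // s' H1 H2; exact: IH H1 H2.
Qed.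

Lemma step_nohalt P W w s s' : step P W w s = Some s' -> is_halt (nth IHalt P (pc s)) = false.
Proof. by rewrite /step; case: (nth IHalt P (pc s)). Qed.

Lemma run_stepn P W w k T s s' :
  stepn P W w k s = Some s' -> run P W w (k + T) s = run P W w T s'.
Proof.
elim: k s => [|k IH] s /=; first by move=> [->].
case Hs: (step P W w s) => [s1|] // H.
by rewrite (step_nohalt Hs); apply: IH.
Qed.

Lemma run_stepn_inv P W w k T s s' sf :
  stepn P W w k s = Some s' -> run P W w T s = Some sf -> exists T', run P W w T' s' = Some sf.
Proof.
elim: k s T => [|k IH] s T /=; first by move=> [<-] H; exists T.
case Hs: (step P W w s) => [s1|] // H.
case: T => [|T] /=; first by rewrite (step_nohalt Hs).
rewrite (step_nohalt Hs) Hs; exact: IH.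
Qed.

Lemma run_stepn_none P W w k s s' :
  stepn P W w k s = Some s' -> (forall T, run P W w T s' = None) -> forall T, run P W w T s = None.
Proof.
move=> Hk Hn T; case Hr: (run P W w T s) => [sf|] //.
have [T' HT'] := run_stepn_inv Hk Hr; by rewrite Hn in HT'.
Qed.

Lemma run_stuck P W w s :
  step P W w s = None -> is_halt (nth IHalt P (pc s)) = false -> forall T, run P W w T s = None.
Proof. by move=> Hs Hh [|T] /=; rewrite Hh // Hs. Qed.

Lemma run_halted P W w T s : is_halt (nth IHalt P (pc s)) -> run P W w T s = Some s.
Proof. by case: T => [|T] /= ->. Qed.
Ltac sstep := rewrite /= /step /= /upd /=.

Lemma bern_mach W w q : 0 < q -> (forall v, v <= q + q -> v < 2 ^ W) ->
  forall ws rg mm u r, drop u w = ws -> rg 5 = q -> rg 6 = r -> r <= q ->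
  (forall d rest, bern q r ws = Some (d, rest) ->
     exists k s', stepn prog W w k (State 6 rg mm u) = Some s' /\
       pc s' = (if d then 15 else 18) /\ k <= 9 * (used s' - u) /\ u < used s' /\
       used s' <= size w /\ Defs.mem s' = mm /\ rest = drop (used s') w /\
       (forall j, j != 6 -> j != 7 -> j != 8 -> reg s' j = rg j))
  /\ (bern q r ws = None -> forall T, run prog W w T (State 6 rg mm u) = None).
Proof.
move=> Hq HW ws; elim: ws => [|b ws IH] rg mm u r Hws H5 H6 Hr.
  split => //= _.
  have Hu : size w <= u by have := congr1 size Hws; rewrite size_drop /=; lia.
  have H1 : r + r < 2 ^ W by apply: HW; lia.
  have Hu' : (u < size w) = false by apply/negbTE; rewrite -leqNgt.
  case Hd: (r + r < q).
    apply: (@run_stepn_none _ _ _ 3 _ (State 11 (upd (upd rg 6 (r + r)) 7 0) mm u)).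
      by sstep; rewrite H6 H1 /= H5 Hd.
    by apply: run_stuck => //; rewrite /step /= Hu'.
  have H2 : r + r - q < 2 ^ W by apply: HW; lia.
  apply: (@run_stepn_none _ _ _ 5 _
     (State 11 (upd (upd (upd (upd rg 6 (r + r)) 7 0) 7 1) 6 (r + r - q)) mm u)).
    by sstep; rewrite H6 H1 /= H5 Hd /= H5 H2.
  by apply: run_stuck => //; rewrite /step /= Hu'.
have Hu : u < size w by have := congr1 size Hws; rewrite size_drop /=; lia.
have := drop_nth false Hu; rewrite Hws => -[Hb Hws']; clear Hws.
have H1 : r + r < 2 ^ W by apply: HW; lia.
have Hu1 : (u < size w) = true by [].
rewrite /=.
case Hd: (r + r < q).
  have Hd' : (q <= r + r) = false by apply/negbTE; rewrite -ltnNge.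
  rewrite Hd'.
  case: b Hb => Hb /=.
    (* b = 1, d = 0 : reject *)
    split => // d rest [<- <-].
    eexists 6, _; split.
      sstep; rewrite H6 H1 /= H5 Hd /= Hu1 /= -Hb /=. reflexivity.
    rewrite /=; split => //; split; first lia.
    split; first lia. split; first lia. split => //. split => //.
    move=> j h6 h7 h8; rewrite (negbTE h6) (negbTE h7) (negbTE h8) //.
  (* b = 0 = d : continue *)
  have Hr' : r + r <= q by lia.
  set rg' := upd (upd (upd rg 6 (r + r)) 7 0) 8 0.
  have [IH1 IH2] := IH rg' mm u.+1 (r + r) (esym Hws') (ltac:(by rewrite /rg' /upd /=)) (ltac:(by rewrite /rg' /upd /=)) Hr'.
  have Hst : stepn prog W w 7 (State 6 rg mm u) = Some (State 6 rg' mm u.+1).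
    by sstep; rewrite H6 H1 /= H5 Hd /= Hu1 /= -Hb /=.
  split.
    move=> d rest Hbr.
    have [k [s' [Hk [Hpc [Hkb [Hus [Huw [Hm [Hrest Hfr]]]]]]]]] := IH1 d rest Hbr.
    exists (7 + k), s'; split; first exact: stepn_trans Hst Hk.
    split => //; split; first lia. split; first lia. split => //. split => //. split => //.
    move=> j h6 h7 h8; rewrite Hfr // /rg' /upd (negbTE h6) (negbTE h7) (negbTE h8) //.
  move=> Hbr; apply: run_stepn_none Hst _; exact: IH2.
have Hd' : (q <= r + r) = true by rewrite leqNgt Hd.
have H2 : r + r - q < 2 ^ W by apply: HW; lia.
rewrite Hd'.
case: b Hb => Hb /=.
  (* b = 1 = d : continue *)
  have Hr' : r + r - q <= q by lia.
  set rg' := upd (upd (upd (upd (upd rg 6 (r + r)) 7 0) 7 1) 6 (r + r - q)) 8 1.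
  have [IH1 IH2] := IH rg' mm u.+1 (r + r - q) (esym Hws') (ltac:(by rewrite /rg' /upd /=)) (ltac:(by rewrite /rg' /upd /=)) Hr'.
  have Hst : stepn prog W w 9 (State 6 rg mm u) = Some (State 6 rg' mm u.+1).
    by sstep; rewrite H6 H1 /= H5 Hd /= H5 H2 /= Hu1 /= -Hb /=.
  split.
    move=> d rest Hbr.
    have [k [s' [Hk [Hpc [Hkb [Hus [Huw [Hm [Hrest Hfr]]]]]]]]] := IH1 d rest Hbr.
    exists (9 + k), s'; split; first exact: stepn_trans Hst Hk.
    split => //; split; first lia. split; first lia. split => //. split => //. split => //.
    move=> j h6 h7 h8; rewrite Hfr // /rg' /upd (negbTE h6) (negbTE h7) (negbTE h8) //.
  move=> Hbr; apply: run_stepn_none Hst _; exact: IH2.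
(* b = 0, d = 1 : select *)
split => // d rest [<- <-].
eexists 7, _; split.
  sstep; rewrite H6 H1 /= H5 Hd /= H5 H2 /= Hu1 /= -Hb /=. reflexivity.
rewrite /=; split => //; split; first lia.
split; first lia. split; first lia. split => //. split => //.
move=> j h6 h7 h8; rewrite (negbTE h6) (negbTE h7) (negbTE h8) //.
Qed.

Lemma bern_zero q w d w' : 0 < q -> bern q 0 w = Some (d, w') -> d = false.
Proof.
move=> Hq; elim: w => [|b w IH] //=.
have -> : (q <= 0 + 0) = false by lia.
by case: ifP => // _ [<-].
Qed.

Lemma size_mask_le (xs : seq bool) (A : seq nat) : size xs <= size A -> size (mask xs A) = count id xs.
Proof.
elim: xs A => [|d xs IH] [|a A] //= H.
case: d => /=; rewrite IH //.
Qed.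

Lemma mask_rcons (xs : seq bool) (A : seq nat) d :
  size xs < size A -> mask (xs ++ [:: d]) A = mask xs A ++ (if d then [:: nth 0 A (size xs)] else [::]).
Proof.
elim: xs A => [|b xs IH] [|a A] //= H.
by destruct b; rewrite IH.
Qed.

Definition Inv (A : seq nat) (h : nat) (w : seq bool) (s : state) (i : nat) (xs : seq bool) : Prop :=
  [/\ pc s = 1, reg s 0 = size A, reg s 1 = h, reg s 2 = i & reg s 3 = count id xs] /\
  [/\ reg s 9 = 1, reg s 11 = 0, size xs = i, i <= size A & count id xs <= h] /\
  [/\ h - count id xs <= size A - i, used s <= size w,
      (forall j, i <= j -> Defs.mem s j = nth 0 A j) &
      (forall j, j < count id xs -> Defs.mem s j = nth 0 (mask xs A) j)].
Lemma loop_mach A h W w : (forall v, v <= 2 * size A -> v < 2 ^ W) ->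
  forall n s i xs, size A - i = n -> Inv A h w s i xs ->
  (forall ys rest, alg n (h - count id xs) (drop (used s) w) = Some (ys, rest) ->
     exists k s', stepn prog W w k s = Some s' /\ pc s' = 2 /\
       k <= 1 + 9 * n + 9 * (used s' - used s) /\ used s <= used s' /\
       used s' <= size w /\ rest = drop (used s') w /\ output s' h = mask (xs ++ ys) A)
  /\ (alg n (h - count id xs) (drop (used s) w) = None -> forall T, run prog W w T s = None).
Proof.
move=> HW n; elim: n => [|n IH] [pc0 rg mm u] i xs Hn HI;
  move: HI => [[Hpc R0 R1 R2 R3] [[R9 R11 Hsz Hi Hc] [Hhc Huw Hm1 Hm2]]];
  rewrite /= in Hpc R0 R1 R2 R3 R9 R11 Huw Hm1 Hm2; subst pc0.
  have Hi' : i = size A by lia.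
  have Hc' : count id xs = h by lia.
  split => // ys rest [<- <-].
  exists 1, (State 2 rg mm u); split.
    sstep; rewrite R2 R0; have -> : (i < size A) = false by lia. done.
  split => //; split; first lia. split => //; split => //; split => //.
  rewrite cats0 /output /=.
  have Hs : size (mask xs A) = h by rewrite size_mask_le; lia.
  rewrite -[RHS](mkseq_nth 0) Hs /mkseq.
  apply/eq_in_map => j; rewrite mem_iota => /andP [_ Hj]; apply: Hm2; lia.
have Hi1 : i < size A by lia.
set c := count id xs in R3 Hc Hhc Hm2 *.
have Hci : c <= i by rewrite /c -Hsz count_size.
have Wh : h - c < 2 ^ W by apply: HW; lia.
have WN : size A - i < 2 ^ W by apply: HW; lia.
have Wh0 : h - c + 0 < 2 ^ W by apply: HW; lia.
set rg6 := upd (upd (upd rg 4 (h - c)) 5 (size A - i)) 6 (h - c + 0).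
have Hst4 : stepn prog W w 4 (State 1 rg mm u) = Some (State 6 rg6 mm u).
  sstep; rewrite R2 R0 Hi1 /= R1 R3 Wh /= R0 R2 WN /= R11 Wh0 /=.
  reflexivity.
have Hq : 0 < n.+1 by [].
have HWq : forall v, v <= n.+1 + n.+1 -> v < 2 ^ W by move=> v Hv; apply: HW; lia.
have G5 : rg6 5 = n.+1 by rewrite /rg6 /upd /= Hn.
have G6 : rg6 6 = h - c by rewrite /rg6 /upd /= addn0.
have Gr : h - c <= n.+1 by lia.
have [BM1 BM2] := bern_mach Hq HWq mm (erefl (drop u w)) G5 G6 Gr.
rewrite /= -/c.
case Hb: (bern n.+1 (h - c) (drop u w)) => [[d w']|]; last first.
  split => // _; apply: run_stepn_none Hst4 _; exact: BM2.
have [k [[pc' rg' mm' u'] [Hk [Hpc' [Hkb [Huu [Huw' [Hmm [Hw' Hfr]]]]]]]]] := BM1 _ _ Hb.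
rewrite /= in Hpc' Hkb Huu Huw' Hmm Hw' Hfr; subst mm'.
have Hst := stepn_trans Hst4 Hk.
have F0 : rg' 0 = size A by rewrite Hfr // /rg6 /upd /=.
have F1 : rg' 1 = h by rewrite Hfr // /rg6 /upd /=.
have F2 : rg' 2 = i by rewrite Hfr // /rg6 /upd /=.
have F3 : rg' 3 = c by rewrite Hfr // /rg6 /upd /=.
have F9 : rg' 9 = 1 by rewrite Hfr // /rg6 /upd /=.
have F11 : rg' 11 = 0 by rewrite Hfr // /rg6 /upd /=.
case: d Hb Hpc' => Hb Hpc'; subst pc'.
  have Hcp : 0 < h - c.
    case E: (h - c) => [|//]; rewrite E in Hb; by have := bern_zero Hq Hb.
  have Wc : c + 1 < 2 ^ W by apply: HW; lia.
  have Wi : i + 1 < 2 ^ W by apply: HW; lia.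
  set rgN := upd (upd (upd rg' 10 (mm i)) 3 (c + 1)) 2 (i + 1).
  set mmN := upd mm c (mm i).
  have Hst5 : stepn prog W w 5 (State 15 rg' mm u') = Some (State 1 rgN mmN u').
    sstep; rewrite F2 F3 F9 Wc /= F2 F9 Wi /=. 
    reflexivity.
  have Hcnt : count id (xs ++ [:: true]) = c + 1 by rewrite count_cat /= -/c; lia.
  have HInv : Inv A h w (State 1 rgN mmN u') (i + 1) (xs ++ [:: true]).
    split; [|split].
    - split => //; rewrite /rgN /upd /= ?F0 ?F1 ?Hcnt //.
    - split; rewrite /rgN /upd /= ?F9 ?F11 ?size_cat ?Hsz ?Hcnt //; lia.
    - split; rewrite ?Hcnt /=; try lia.
        move=> j Hj; rewrite /mmN /upd; case: ifP => [/eqP E|_]; [lia| apply: Hm1; lia].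
      move=> j Hj; rewrite /mmN /upd mask_rcons ?Hsz //.
      have Hsm : size (mask xs A) = c by rewrite size_mask_le // Hsz.
      rewrite nth_cat Hsm.
      case: (ltnP j c) => Hjc.
      + case: ifP => [/eqP E|_]; [lia| by apply: Hm2].
      + have E : j = c by lia.
        subst j; case: ifP => [_|/eqP //]; rewrite subnn /=; apply: Hm1; lia.
  have [IH1 IH2] := IH (State 1 rgN mmN u') (i + 1) (xs ++ [:: true]) ltac:(lia) HInv.
  have Hp : h - c - true = h - count id (xs ++ [:: true]) by rewrite Hcnt; lia.
  rewrite Hw' Hp /=.
  have Hst' := stepn_trans Hst Hst5.
  case Ha: (alg n (h - count id (xs ++ [:: true])) (drop u' w)) => [[ys' rest']|].
    split => // ys rest [<- <-].
    have [k2 [s2 [Hk2 [Hpc2 [Hk2b [Hu2 [Huw2 [Hr2 Ho2]]]]]]]] := IH1 _ _ Ha.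
    exists (4 + k + 5 + k2), s2; split; first exact: stepn_trans Hst' Hk2.
    rewrite /= in Hk2b Hu2.
    split => //; split; first lia. split; first lia. split => //; split => //.
    by rewrite Ho2 -catA.
  split => // _; apply: run_stepn_none Hst' _; exact: IH2.
have Hpq : h - c < n.+1.
  case: (ltngtP (h - c) n.+1) => E //; first lia.
  rewrite E in Hb; by have := bern_full Hb.
have Wi : i + 1 < 2 ^ W by apply: HW; lia.
set rgN := upd rg' 2 (i + 1).
have Hst2 : stepn prog W w 2 (State 18 rg' mm u') = Some (State 1 rgN mm u').
  sstep; rewrite F2 F9 Wi /=; reflexivity.
have Hcnt : count id (xs ++ [:: false]) = c by rewrite count_cat /= -/c; lia.
have HInv : Inv A h w (State 1 rgN mm u') (i + 1) (xs ++ [:: false]).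
  split; [|split].
  - split => //; rewrite /rgN /upd /= ?F0 ?F1 ?F3 ?Hcnt //.
  - split; rewrite /rgN /upd /= ?F9 ?F11 ?size_cat ?Hsz ?Hcnt //; lia.
  - split; rewrite ?Hcnt /=; try lia.
      move=> j Hj; apply: Hm1; lia.
    move=> j Hj; rewrite mask_rcons ?Hsz // cats0; exact: Hm2.
have [IH1 IH2] := IH (State 1 rgN mm u') (i + 1) (xs ++ [:: false]) ltac:(lia) HInv.
have Hp : h - c - false = h - count id (xs ++ [:: false]) by rewrite Hcnt; lia.
rewrite Hw' Hp /=.
have Hst' := stepn_trans Hst Hst2.
case Ha: (alg n (h - count id (xs ++ [:: false])) (drop u' w)) => [[ys' rest']|].
  split => // ys rest [<- <-].
  have [k2 [s2 [Hk2 [Hpc2 [Hk2b [Hu2 [Huw2 [Hr2 Ho2]]]]]]]] := IH1 _ _ Ha.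
  exists (4 + k + 2 + k2), s2; split; first exact: stepn_trans Hst' Hk2.
  rewrite /= in Hk2b Hu2.
  split => //; split; first lia. split; first lia. split => //; split => //.
  by rewrite Ho2 -catA.
split => // _; apply: run_stepn_none Hst' _; exact: IH2.
Qed.

Lemma word_ok N v : v <= 2 * N -> v < 2 ^ (word_size 2 N).
Proof.
move=> Hv; rewrite /word_size.
set t := trunc_log 2 N.
have H1 : N < 2 ^ t.+1 by apply: trunc_log_ltn.
have H2 : 2 ^ t.+2 <= 2 ^ (2 * t.+1) by apply: leq_pexp2l => //; lia.
have H3 : 2 ^ t.+2 = 2 * 2 ^ t.+1 by rewrite expnS.
lia.
Qed.

Lemma main_mach A h W w : h <= size A -> (forall v, v <= 2 * size A -> v < 2 ^ W) ->
  (forall ys rest, alg (size A) h w = Some (ys, rest) ->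
     exists k s', stepn prog W w k (init A h) = Some s' /\ pc s' = 2 /\
       k <= 2 + 9 * size A + 9 * used s' /\ used s' <= size w /\
       rest = drop (used s') w /\ output s' h = mask ys A)
  /\ (alg (size A) h w = None -> forall T, run prog W w T (init A h) = None).
Proof.
move=> Hh HW.
set rg1 := upd (fun r => if r == 0 then size A else if r == 1 then h else 0) 9 1.
have Hst : stepn prog W w 1 (init A h) = Some (State 1 rg1 (fun i => nth 0 A i) 0).
  by rewrite /init /= /step /=.
have HInv : Inv A h w (State 1 rg1 (fun i => nth 0 A i) 0) 0 [::].
  split; [|split].
  - by split => //; rewrite /rg1 /upd /=.
  - by split => //; rewrite /rg1 /upd /=.
  - by split => //=; lia.
have [L1 L2] := loop_mach HW (subn0 (size A)) HInv.
rewrite /= drop0 subn0 in L1 L2.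
split.
  move=> ys rest Ha.
  have [k [s' [Hk [Hpc [Hkb [Hu [Huw [Hr Ho]]]]]]]] := L1 _ _ Ha.
  exists (1 + k), s'; split; first exact: stepn_trans Hst Hk.
  rewrite /= in Hkb; do !split => //; lia.
move=> Ha; apply: run_stepn_none Hst _; exact: L2.
Qed.

Lemma bern_cat q r w z d rest : bern q r w = Some (d, rest) -> bern q r (w ++ z) = Some (d, rest ++ z).
Proof.
elim: w r => [|b w IH] r //=.
case: ifP => _; first exact: IH.
by move=> [<- <-].
Qed.

Lemma alg_cat n p w z ys rest : alg n p w = Some (ys, rest) -> alg n p (w ++ z) = Some (ys, rest ++ z).
Proof.
elim: n p w ys rest => [|n IH] p w ys rest /=; first by move=> [<- <-].
case Hb: (bern n.+1 p w) => [[d w']|] //.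
rewrite (bern_cat z Hb).
case Ha: (alg n (p - d) w') => [[xs w'']|] //.
by rewrite (IH _ _ _ _ Ha) => -[<- <-].
Qed.

Lemma alg_size n p w ys rest : alg n p w = Some (ys, rest) -> size ys = n.
Proof.
elim: n p w ys rest => [|n IH] p w ys rest /=; first by move=> [<- _].
case: (bern n.+1 p w) => [[d w']|] //.
case Ha: (alg n (p - d) w') => [[xs w'']|] //.
by move=> [<- _] /=; rewrite (IH _ _ _ _ Ha).
Qed.



Lemma pr_mono L (E E' : seq bool -> bool) : (forall w, size w = L -> E w -> E' w) -> Rle (pr L E) (pr L E').
Proof.
elim: L E E' => [|L IH] E E' H.
  rewrite /=; case HE: (E [::]); first by rewrite H //; lra.
  case: (E' [::]); lra.
rewrite !pr_S.
have H1 : Rle (pr L (fun w => E (false :: w))) (pr L (fun w => E' (false :: w))).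
  by apply: IH => w Hw; apply: H; rewrite /= Hw.
have H2 : Rle (pr L (fun w => E (true :: w))) (pr L (fun w => E' (true :: w))).
  by apply: IH => w Hw; apply: H; rewrite /= Hw.
lra.
Qed.

Lemma mask_memE (A : seq nat) (ys : seq bool) : uniq A -> size ys = size A ->
  [seq a \in mask ys A | a <- A] = ys.
Proof.
elim: A ys => [|a A IH] [|b ys] //= /andP [HaA HA] [Hs].
have Ha : a \in mask ys A = false by apply/negP => /mem_mask; rewrite (negbTE HaA).
congr cons.
  by case: b; rewrite ?in_cons ?eqxx ?Ha.
rewrite -[RHS](IH ys HA Hs); apply/eq_in_map => a' Ha'.
case: b => //; rewrite in_cons.
have -> : (a' == a) = false by apply/negP => /eqP E; subst a'; rewrite Ha' in HaA.
done.
Qed.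

Local Open Scope R_scope.

Lemma exp_le x y : Rle x y -> Rle (exp x) (exp y).
Proof.
move=> H; case: (Rle_lt_or_eq_dec x y H) => [Hl|->].
  by apply: Rlt_le; apply: exp_increasing.
by apply: Rle_refl.
Qed.

Lemma exp_nat N : exp (- INR N) = exp (-1) ^ N.
Proof.
elim: N => [|N IH]; first by rewrite /= Ropp_0 exp_0.
rewrite S_INR /= -IH -exp_plus; congr exp; lra.
Qed.

Lemma tail_real N : Rle (3 ^ N * (2/3) ^ (60 * N)) (exp (- sqrt (INR N))).
Proof.
rewrite pow_mult -Rpow_mult_distr.
have Hb : (2/3) ^ 60 <= 1/9.
  have -> : (60 = 6 + 54)%nat by [].
  rewrite pow_add.
  have H54 : (2/3)^54 <= 1 by rewrite -(pow1 54); apply: pow_incr; lra.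
  have H54' : 0 <= (2/3)^54 by apply: pow_le; lra.
  have -> : (2/3)^6 = 64/729 by simpl; field.
  nra.
have He : 1/3 <= exp (-1).
  have H0 : exp (-1) * exp 1 = 1.
    by rewrite -exp_plus; replace (-1 + 1) with 0 by lra; rewrite exp_0.
  have := exp_le_3; have := exp_pos (-1); nra.
have Hb0 : 0 <= (2/3)^60 by apply: pow_le; lra.
apply: Rle_trans (_ : exp (-1) ^ N <= _).
  apply: pow_incr; lra.
rewrite -exp_nat; apply: exp_le; apply: Ropp_le_contravar.
case: N => [|N]; first by rewrite /= sqrt_0; lra.
have HN : 1 <= INR N.+1 by rewrite S_INR; have := pos_INR N; lra.
have Hs1 : 1 <= sqrt (INR N.+1) by rewrite -sqrt_1; apply: sqrt_le_1_alt.
have Hss := sqrt_sqrt (INR N.+1) ltac:(lra).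
nra.
Qed.

Local Close Scope R_scope.

Theorem lemma7p1 :
  exists (P : program) (cw C K : nat),
  forall (A : seq nat) (h : nat),
    uniq A -> h <= size A ->
    (forall S : seq nat, uniq S -> {subset S <= A} -> size S = h ->
       Un_cv (prob_out P (word_size cw (size A)) A h S)
             (Rinv (INR (binomial (size A) h))))
    /\
    Rle (Rminus R1 (Rmult (INR K) (exp (Ropp (sqrt (INR (size A)))))))
        (prob_within P (word_size cw (size A)) A h
            (C * (size A).+1) (60 * size A)).
Proof.
exists prog, 2, 549, 1 => A h HA Hh.
set N := size A.
set W := word_size 2 N.
have HW : forall v, v <= 2 * N -> v < 2 ^ W by move=> v; apply: word_ok.
split.
  move=> S HS HSA HSs.
  set x := [seq a \in S | a <- A].
  have Hxs : size x = N by rewrite size_map.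
  have Hfp : perm_eq (filter (fun a => a \in S) A) S.
    apply: uniq_perm; [exact: filter_uniq| exact: HS|].
    move=> a; rewrite mem_filter; apply/andP/idP => [[]//| Ha]; split => //; exact: HSA.
  have Hmx : mask x A = filter (fun a => a \in S) A by rewrite filter_mask.
  have Hxc : count id x = h.
    rewrite count_map -size_filter -HSs; apply: perm_size.
    exact: Hfp.
  have Hxu : forall ys, size ys = N -> perm_eq (mask ys A) S -> ys = x.
    move=> ys Hys Hp; rewrite -(mask_memE HA Hys) /x; apply/eq_map => a.
    exact: (perm_mem Hp).
  pose EL L := fun w : seq bool =>
    if run prog W w L (init A h) is Some s then perm_eq (output s h) S else false.
  have Hpo : forall L, prob_out prog W A h S L = pr L (EL L).
    by move=> L; rewrite /prob_out -pr_card.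
  have Hup : forall L, Rle (pr L (EL L)) (pr L (Ealg N h x)).
    move=> L; apply: pr_mono => w _; rewrite /EL.
    case Hr: (run prog W w L (init A h)) => [sf|] // Hperm.
    have [MM1 MM2] := main_mach w Hh HW.
    case Ha: (alg N h w) => [[ys rest]|]; last by rewrite (MM2 Ha L) in Hr.
    have [k [s' [Hk [Hpc [_ [_ [_ Ho]]]]]]] := MM1 _ _ Ha.
    have [T' HT'] := run_stepn_inv Hk Hr.
    rewrite run_halted in HT'; last by rewrite Hpc.
    case: HT' => Es; subst sf.
    rewrite /Ealg Ha; apply/eqP; apply: Hxu; [exact: alg_size Ha| by rewrite -Ho].
  have Hlo : forall K L, K <= L -> 2 + 9 * N + 9 * K <= L ->
      Rle (pr L (fun w => Ealg N h x (take K w))) (pr L (EL L)).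
    move=> K L HKL HL; apply: pr_mono => w _.
    rewrite /Ealg; case Ha0: (alg N h (take K w)) => [[ys rest0]|] // /eqP Eys; subst ys.
    have Ha := alg_cat (drop K w) Ha0; rewrite cat_take_drop in Ha.
    have [MM1 _] := main_mach w Hh HW.
    have [k [s' [Hk [Hpc [Hkb [Huw [Hr Ho]]]]]]] := MM1 _ _ Ha.
    have Hsz : size (rest0 ++ drop K w) = size (drop (used s') w) by rewrite Hr.
    rewrite size_cat !size_drop in Hsz.
    have HkL : k <= L by lia.
    rewrite /EL -(subnKC HkL) (run_stepn _ Hk) run_halted ?Hpc // Ho Hmx; exact: Hfp.
  move=> eps Heps.
  have Hhalf : Rlt (Rabs (1/2)) 1 by rewrite Rabs_right; lra.
  have HN0 : Rle 0 (INR N) by apply: pos_INR.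
  have HNe : Rlt 0 (eps / (INR N + 1)) by apply: Rdiv_lt_0_compat; lra.
  have [M0 HM] := pow_lt_1_zero (1/2) Hhalf _ HNe.
  have HM0 := HM M0 (le_n M0).
  have Hd0 : Rle 0 ((1/2) ^ M0) by apply: pow_le; lra.
  rewrite Rabs_right in HM0; last lra.
  have Hd : Rlt (INR N * (1/2) ^ M0) eps.
    have E : Rmult (Rplus (INR N) 1) (Rdiv eps (Rplus (INR N) 1)) = eps by field; lra.
    nra.
  set K := (N * M0)%N.
  exists (K + (2 + 9 * N + 9 * K))%N => L /leP HL.
  rewrite Hpo /Rdist.
  have HV := V_binom Hxc; rewrite Hxs in HV.
  have E1 := Ealg_err x Hh (_ : N * M0 <= L); rewrite HV in E1.
  have E2 := Ealg_err x Hh (leqnn K); rewrite HV in E2.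
  have E1' := RabsP (E1 ltac:(rewrite /K in HL; lia)).
  have E2' := RabsP E2.
  have U := Hup L.
  have Lo := Hlo K L ltac:(lia) ltac:(lia).
  rewrite pr_take in Lo; last lia.
  apply: Rle_lt_trans Hd; apply: Rabs_le; rewrite -/N in E1' E2'; lra.
have -> : prob_within prog W A h (549 * N.+1) (60 * N) =
    pr (60 * N) (fun w => halts (run prog W w (549 * N.+1) (init A h))).
  by rewrite /prob_within -pr_card.
apply: (Rle_trans _ (pr (60 * N) (Esucc N h))).
  apply: Rle_trans (Esucc_tail N h (60 * N)).
  have := tail_real N; rewrite /= Rmult_1_l; lra.
apply: pr_mono => w Hw; rewrite /Esucc.
case Ha: (alg N h w) => [[ys rest]|] // _.
have [MM1 _] := main_mach w Hh HW.
have [k [s' [Hk [Hpc [Hkb [Huw [Hr Ho]]]]]]] := MM1 _ _ Ha.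
have Hk5 : k <= 549 * N.+1 by lia.
by rewrite -(subnKC Hk5) (run_stepn _ Hk) run_halted ?Hpc.
Qed.
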